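(* Assume (A1)–(A5). Then the blow-up time function $T$ satisfies $|T(x)-T(y)|\le\frac{1}{1+\varepsilon_0}|x-y|$ for all $x,y\in B_{R^*}$, where $\varepsilon_0$ is the constant in (A4).
   Context: Let $p>1$ and $\mu>0$ with $p<1+2/\mu$, and let $R^*,T^*>0$. Write $B_R=\{x\in\mathbb{R}:|x|<R\}$ and $D_\pm=\partial_t\pm\partial_x$. Consider the system $D_-\phi=2^{-p}|\phi+\psi|^p-\frac{\mu}{1+t}\frac{\phi+\psi}{2}$, $D_+\psi=2^{-p}|\phi+\psi|^p-\frac{\mu}{1+t}\frac{\phi+\psi}{2}$, $\phi(x,0)=f(x)$, $\psi(x,0)=g(x)$. Fix $\gamma_1,\gamma_2>0$ with $\gamma_1+\gamma_2>\max\big(1,(\mu p 2^p)^{1/(p-1)}\big)$ and let $T_1=\frac{1}{(p-1)\mu}\ln\Big(\frac{2^{1-p}/\mu}{2^{1-p}/\mu-(\gamma_1+\gamma_2)^{1-p}}\Big)$. Assumptions: (A1) $T_1<T^*$. (A2) $f\ge\gamma_1$, $g\ge\gamma_2$ on $B_{R^*+T^*}$. (A3) $f,g\in\mathcal{C}^4(\overline{B_{R^*+T^*}})$. (A4) There is $\varepsilon_0>0$ with $2^{-p}(\gamma_1+\gamma_2)^p-\frac{\mu}{2}(\gamma_1+\gamma_2)\ge(2+\varepsilon_0)\max_{x\in B_{R^*+T^*}}(|f'(x)|+|g'(x)|)$. (A5) There is $\varepsilon_1\neq-1$ with $2^{-p}(2p-1)\big(1+\frac{\varepsilon_1}{2(1+\varepsilon_1)}\big)\big(1-\frac{1}{2p}\big)-2^{-p+1}p-\mu>0$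 such that $2^{-p}(\gamma_1+\gamma_2)^p-\frac{\mu}{2}(\gamma_1+\gamma_2)\ge(2+\varepsilon_1)\max_{x\in B_{R^*+T^*}}(|f'(x)|+|g'(x)|)$. Let $K_{R^*,T^*}=\{(x,t):t>0,\ |x-x_0|<T^*-t\ \text{for some } x_0\in B_{R^*}\}$. Define iterates $\phi_0\equiv\gamma_1$, $\psi_0\equiv\gamma_2$ and, with $\mathcal{N}_n(x,s)=2^{-p}|\phi_n+\psi_n|^p(x,s)-\frac{\mu}{1+s}\frac{(\phi_n+\psi_n)(x,s)}{2}$, $\phi_{n+1}(x,t)=f(x+t)+\int_0^t\mathcal{N}_n(x+t-s,s)\,ds$, $\psi_{n+1}(x,t)=g(x-t)+\int_0^t\mathcal{N}_n(x-t+s,s)\,ds$. Set $\phi=\sup_n\phi_n$, $\psi=\sup_n\psi_n$, and the blow-up time $T(x)=\sup\{t\in(0,T^* ):(\phi+\psi)(x,t)<\infty\}$ for $x\in B_{R^*}$. *)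

(* Defs.v *)
From Stdlib Require Import Reals Lra.
From Coquelicot Require Import Coquelicot.
Open Scope R_scope.

(* a^q for a >= 0 and q > 0, with the convention 0^q = 0 *)
Definition powa (a q : R) : R := if Rlt_dec 0 a then Rpower a q else 0.

Definition Nl (p mu u s : R) : R :=
  Rpower 2 (- p) * powa (Rabs u) p - mu / (1 + s) * (u / 2).

Fixpoint iterates (p mu g1 g2 : R) (f g : R -> R) (n : nat)
  : (R -> R -> R) * (R -> R -> R) :=
  match n with
  | O => (fun _ _ => g1, fun _ _ => g2)
  | S m =>
      let '(ph, ps) := iterates p mu g1 g2 f g m in
      let N := fun x s => Nl p mu (ph x s + ps x s) s in
      (fun x t => f (x + t) + RInt (fun s => N (x + t - s) s) 0 t,
       fun x t => g (x - t) + RInt (fun s => N (x - t + s) s) 0 t)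
  end.

Definition phi_n (p mu g1 g2 : R) (f g : R -> R) (n : nat) : R -> R -> R := fst (iterates p mu g1 g2 f g n).
Definition psi_n (p mu g1 g2 : R) (f g : R -> R) (n : nat) : R -> R -> R := snd (iterates p mu g1 g2 f g n).

Definition phi_sup (p mu g1 g2 : R) (f g : R -> R) (x t : R) : Rbar :=
  Sup_seq (fun n => Finite (phi_n p mu g1 g2 f g n x t)).
Definition psi_sup (p mu g1 g2 : R) (f g : R -> R) (x t : R) : Rbar :=
  Sup_seq (fun n => Finite (psi_n p mu g1 g2 f g n x t)).

Definition blowup_time (p mu g1 g2 : R) (f g : R -> R) (Tstar x : R) : Rbar :=
  Lub_Rbar (fun t => 0 < t < Tstar /\
    Rbar_lt (Rbar_plus (phi_sup p mu g1 g2 f g x t)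
                       (psi_sup p mu g1 g2 f g x t)) p_infty).

Definition Ck_closed (k : nat) (a b : R) (f : R -> R) : Prop :=
  exists F : nat -> R -> R,
    (forall x, a <= x <= b -> F O x = f x) /\
    (forall j, (j < k)%nat -> forall x, a <= x <= b ->
       filterlim (fun h => (F j (x + h) - F j x) / h)
         (within (fun h => h <> 0 /\ a <= x + h <= b) (locally 0))
         (locally (F (S j) x))) /\
    (forall j, (j <= k)%nat -> forall x, a <= x <= b ->
       filterlim (F j) (within (fun y => a <= y <= b) (locally x))
         (locally (F j x))).

Definition T1_def (p mu g1 g2 : R) : R :=
  1 / ((p - 1) * mu) *
  ln ((Rpower 2 (1 - p) / mu) /
      (Rpower 2 (1 - p) / mu - Rpower (g1 + g2) (1 - p))).

Definition deriv_vals (f g : R -> R) (L : R) : R -> Prop :=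
  fun m => exists x, Rabs x < L /\ m = Rabs (Derive f x) + Rabs (Derive g x).

(* Main.v *)
Require Import Defs.
From Stdlib Require Import Reals.
From Coquelicot Require Import Coquelicot.
From Stdlib Require Import Lra Lia ZArith RList.
Open Scope R_scope.

Lemma const_couple (g : R -> R) u v c : u <= v -> (forall t, u < t < v -> g t = c) ->
  adapted_couple g u v (cons u (cons v nil)) (cons c nil).
Proof.
  intros Huv Hc; unfold adapted_couple; repeat split.
  - unfold ordered_Rlist; intros i Hi; simpl in Hi.
    destruct i; [simpl; lra | lia].
  - simpl; unfold Rmin; destruct Rle_dec; lra.
  - simpl; unfold Rmax; destruct Rle_dec; lra.
  - intros i Hi; simpl in Hi; destruct i; [|lia].
    unfold constant_D_eq, open_interval; simpl; intros; apply Hc; lra.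
Qed.

Lemma const_step (g : R -> R) u v c : u <= v -> (forall t, u < t < v -> g t = c) ->
  IsStepFun g u v.
Proof.
  intros Huv Hc. exists (cons u (cons v nil)). exists (cons c nil).
  now apply const_couple.
Qed.

Lemma const_step_int (g : R -> R) u v c : u <= v -> (forall t, u < t < v -> g t = c) ->
  forall pr : IsStepFun g u v, RiemannInt_SF (mkStepFun pr) = c * (v - u).
Proof.
  intros Huv Hc pr. unfold RiemannInt_SF. destruct Rle_dec as [_|]; [|lra].
  rewrite (StepFun_P17 (StepFun_P1 (mkStepFun pr)) (const_couple g u v c Huv Hc)).
  simpl. ring.
Qed.

Lemma up_pos_nat (r : R) : 0 <= r -> { n : nat | r < INR n }.
Proof.
  intros Hr. exists (Z.to_nat (up r)).
  destruct (archimed r) as [H1 H2].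
  rewrite INR_IZR_INZ. rewrite Z2Nat.id; [lra|].
  apply le_IZR. lra.
Qed.

Lemma mono_RI_aux (F : R -> R) a b :
  a < b -> (forall x y, x <= y -> F x <= F y) -> Riemann_integrable F a b.
Proof.
  intros Hab HF eps.
  destruct (up_pos_nat ((b - a) * (F b - F a) / eps)) as [n0 Hn0].
  { apply Rmult_le_pos; [apply Rmult_le_pos; [lra| specialize (HF a b); lra]|].
    apply Rlt_le, Rinv_0_lt_compat, cond_pos. }
  set (n := S n0).
  assert (Hn : 0 < INR n) by (unfold n; rewrite S_INR; pose proof (pos_INR n0); lra).
  set (hh := (b - a) / INR n).
  assert (Hhh : 0 < hh) by (unfold hh; apply Rdiv_lt_0_compat; lra).
  set (idx := fun t => Int_part ((t - a) / hh)).
  set (xn := fun k : nat => a + hh * INR k).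
  set (phi := fun t => F (a + hh * IZR (idx t))).
  set (psi := fun t => F (a + hh * (IZR (idx t) + 1)) - F (a + hh * IZR (idx t))).
  assert (Hidx : forall (k : nat) t, xn k < t < xn (S k) -> idx t = Z.of_nat k).
  { intros k t Ht. unfold xn in Ht. rewrite S_INR in Ht. unfold idx, Int_part.
    assert (E : (Z.of_nat k + 1)%Z = up ((t - a) / hh)).
    { assert (Q : (t - a) / hh * hh = t - a) by (field; lra).
      assert (A1 : INR k < (t - a) / hh) by (apply Rmult_lt_reg_r with hh; lra).
      assert (A2 : (t - a) / hh < INR k + 1) by (apply Rmult_lt_reg_r with hh; lra).
      apply tech_up; rewrite plus_IZR, <- INR_IZR_INZ; simpl; lra. }
    rewrite <- E. ring. }
  assert (Hphi : forall k t, xn k < t < xn (S k) -> phi t = F (xn k)).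
  { intros k t Ht; unfold phi; rewrite (Hidx k t Ht), <- INR_IZR_INZ; reflexivity. }
  assert (Hpsi : forall k t, xn k < t < xn (S k) -> psi t = F (xn (S k)) - F (xn k)).
  { intros k t Ht; unfold psi; rewrite (Hidx k t Ht), <- INR_IZR_INZ.
    unfold xn; rewrite S_INR; reflexivity. }
  assert (Hxle : forall k, xn k <= xn (S k)).
  { intros k; unfold xn; rewrite S_INR; nra. }
  assert (Xa : xn 0%nat = a) by (unfold xn; simpl; ring).
  assert (SPhi : forall k, IsStepFun phi a (xn k)).
  { induction k.
    - rewrite Xa. apply (const_step phi a a 0); [lra| intros; lra].
    - apply StepFun_P46 with (xn k); auto.
      apply (const_step phi (xn k) (xn (S k)) (F (xn k))); auto. }
  assert (SPsi : forall k, IsStepFun psi a (xn k)).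
  { induction k.
    - rewrite Xa. apply (const_step psi a a 0); [lra| intros; lra].
    - apply StepFun_P46 with (xn k); auto.
      apply (const_step psi (xn k) (xn (S k)) (F (xn (S k)) - F (xn k))); auto. }
  assert (IPsi : forall k (pr : IsStepFun psi a (xn k)),
            RiemannInt_SF (mkStepFun pr) = hh * (F (xn k) - F a)).
  { induction k; intros pr.
    - revert pr; rewrite Xa; intros pr.
      rewrite (const_step_int psi a a 0); [ring|lra|intros; lra].
    - assert (pr2 : IsStepFun psi (xn k) (xn (S k))).
      { apply (const_step psi (xn k) (xn (S k)) (F (xn (S k)) - F (xn k))); auto. }
      rewrite <- (StepFun_P43 (SPsi k) pr2 pr), IHk.
      rewrite (const_step_int psi (xn k) (xn (S k)) (F (xn (S k)) - F (xn k))); auto.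
      replace (xn (S k) - xn k) with hh by (unfold xn; rewrite S_INR; ring). ring. }
  assert (Xn : xn n = b).
  { unfold xn, hh. field. lra. }
  pose proof (SPhi n) as P1. pose proof (SPsi n) as P2.
  pose proof (IPsi n P2) as I2.
  revert P1 P2 I2. rewrite Xn. intros P1 P2 I2.
  exists (mkStepFun P1). exists (mkStepFun P2). split.
  - intros t Ht. rewrite Rmin_left in Ht by lra. rewrite Rmax_right in Ht by lra.
    simpl. unfold phi, psi.
    destruct (base_Int_part ((t - a) / hh)) as [B1 B2].
    fold (idx t) in B1, B2.
    assert (L1 : a + hh * IZR (idx t) <= t).
    { assert (hh * IZR (idx t) <= hh * ((t - a) / hh)) by (apply Rmult_le_compat_l; lra).
      replace (hh * ((t - a) / hh)) with (t - a) in H by (field; lra). lra. }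
    assert (L2 : t <= a + hh * (IZR (idx t) + 1)).
    { assert (hh * ((t - a) / hh) <= hh * (IZR (idx t) + 1)) by (apply Rmult_le_compat_l; lra).
      replace (hh * ((t - a) / hh)) with (t - a) in H by (field; lra). lra. }
    pose proof (HF _ _ L1). pose proof (HF _ _ L2).
    rewrite Rabs_right; lra.
  - simpl in I2 |- *. rewrite I2.
    rewrite Rabs_right.
    + unfold hh. apply Rmult_lt_reg_r with (INR n); auto.
      replace ((b - a) / INR n * (F b - F a) * INR n) with ((b - a) * (F b - F a)) by (field; lra).
      assert (INR n0 < INR n) by (unfold n; rewrite S_INR; lra).
      pose proof (cond_pos eps).
      apply Rmult_lt_compat_r with (r := eps) in Hn0; auto.
      unfold Rdiv in Hn0. rewrite Rmult_assoc, Rinv_l in Hn0 by lra.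
      nra.
    + apply Rle_ge, Rmult_le_pos; [lra| specialize (HF a b); lra].
Qed.

Lemma mono_ex_RInt (h : R -> R) a b : a <= b ->
  (forall x y, a <= x -> x <= y -> y <= b -> h x <= h y) -> ex_RInt h a b.
Proof.
  intros Hab Hh. destruct (Req_dec a b) as [E|Hne].
  - subst. apply ex_RInt_point.
  - set (F := fun t => h (Rmin b (Rmax a t))).
    apply ex_RInt_ext with F.
    { intros x Hx. rewrite Rmin_left in Hx by lra. rewrite Rmax_right in Hx by lra.
      unfold F. f_equal. rewrite Rmax_right by lra. rewrite Rmin_right by lra. reflexivity. }
    apply ex_RInt_Reals_1. apply mono_RI_aux; [lra|].
    intros x y Hxy. unfold F. apply Hh;
      unfold Rmin, Rmax; repeat destruct Rle_dec; lra.
Qed.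

Lemma Nl_pos p mu u s : 0 < u ->
  Nl p mu u s = Rpower 2 (-p) * Rpower u p - mu / (1 + s) * (u / 2).
Proof.
  intros Hu. unfold Nl, powa. rewrite Rabs_right by lra.
  destruct Rlt_dec; [reflexivity| lra].
Qed.

Lemma Nl_mono_u p mu gam u v s : 1 < p -> 0 < mu -> 0 < gam -> 0 <= s ->
  mu / 2 <= Rpower 2 (-p) * p * Rpower gam (p - 1) ->
  gam <= u -> u <= v -> Nl p mu u s <= Nl p mu v s.
Proof.
  intros Hp Hmu Hg Hs Hk Hu Huv.
  destruct (Req_dec u v) as [E|Hne]; [subst; lra|].
  rewrite !Nl_pos by lra.
  set (h := fun w => Rpower 2 (-p) * Rpower w p - mu / (1 + s) * (w / 2)).
  set (h' := fun w => Rpower 2 (-p) * (p * Rpower w (p - 1)) - mu / (1 + s) * (1 / 2)).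
  destruct (MVT_cor2 h h' u v) as [c [Hc1 Hc2]]; [lra| |].
  - intros c Hc. unfold h, h'.
    assert (D1 : is_derive (fun x => Rpower x p) c (p * Rpower c (p - 1))).
    { apply is_derive_Reals, derivable_pt_lim_power; lra. }
    apply is_derive_Reals. auto_derive.
    + eexists; exact D1.
    + replace (Derive (fun x : R => Rpower x p) c) with (p * Rpower c (p - 1)) by (symmetry; apply is_derive_unique; exact D1). field. lra.
  - unfold h in Hc1.
    assert (0 <= h' c).
    { unfold h'.
      assert (Rpower gam (p - 1) <= Rpower c (p - 1)) by (apply Rle_Rpower_l; lra).
      assert (0 < Rpower 2 (-p)) by apply exp_pos.
      assert (mu / (1 + s) <= mu).
      { unfold Rdiv. rewrite <- (Rmult_1_r mu) at 2. apply Rmult_le_compat_l; [lra|].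
        rewrite <- Rinv_1. apply Rinv_le_contravar; lra. }
      assert (Rpower 2 (-p) * p * Rpower gam (p - 1) <= Rpower 2 (-p) * p * Rpower c (p - 1)).
      { apply Rmult_le_compat_l; [|lra]. apply Rmult_le_pos; lra. }
      lra. }
    nra.
Qed.

Lemma Nl_mono_s p mu u s s' : 0 < mu -> 0 < u -> 0 <= s -> s <= s' ->
  Nl p mu u s <= Nl p mu u s'.
Proof.
  intros Hmu Hu Hs Hss. rewrite !Nl_pos by lra.
  assert (mu / (1 + s') <= mu / (1 + s)).
  { unfold Rdiv. apply Rmult_le_compat_l; [lra|]. apply Rinv_le_contravar; lra. }
  nra.
Qed.

Lemma Nl_mono p mu gam u v s s' : 1 < p -> 0 < mu -> 0 < gam ->
  mu / 2 <= Rpower 2 (-p) * p * Rpower gam (p - 1) ->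
  gam <= u -> u <= v -> 0 <= s -> s <= s' -> Nl p mu u s <= Nl p mu v s'.
Proof.
  intros. apply Rle_trans with (Nl p mu v s).
  - apply Nl_mono_u with gam; auto.
  - apply Nl_mono_s; lra.
Qed.

Lemma Nl_upper p mu u K s : 0 < p -> 0 < mu -> 0 < u -> u <= K -> 0 <= s ->
  Nl p mu u s <= Rpower 2 (-p) * Rpower K p.
Proof.
  intros. rewrite Nl_pos by lra.
  assert (Rpower u p <= Rpower K p) by (apply Rle_Rpower_l; lra).
  assert (0 < Rpower 2 (-p)) by apply exp_pos.
  assert (0 <= mu / (1 + s)) by (apply Rlt_le, Rdiv_lt_0_compat; lra).
  nra.
Qed.

Lemma Nl_lower p mu gam u s : 1 < p -> 0 < mu -> 0 < gam ->
  mu / 2 <= Rpower 2 (-p) * p * Rpower gam (p - 1) ->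
  gam <= u -> 0 <= s ->
  Rpower 2 (-p) * Rpower gam p - mu / 2 * gam <= Nl p mu u s.
Proof.
  intros. apply Rle_trans with (Nl p mu gam 0).
  - rewrite Nl_pos by lra. replace (1 + 0) with 1 by ring. lra.
  - apply Nl_mono with gam; lra.
Qed.

Lemma ck_deriv k L f : (1 <= k)%nat -> Ck_closed k (- L) L f ->
  exists f', forall z, Rabs z < L -> derivable_pt_lim f z (f' z).
Proof.
  intros Hk [F [H0 [H1 _]]]. exists (F 1%nat). intros z Hz.
  assert (Hzb : - L <= z <= L) by (apply Rabs_lt_between in Hz; lra).
  pose proof (H1 0%nat ltac:(lia) z Hzb) as HF.
  intros eps Heps.
  specialize (HF (ball (F 1%nat z) eps) (locally_ball _ (mkposreal eps Heps))).
  destruct HF as [d Hd].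
  assert (Hpos : 0 < Rmin d (L - Rabs z)).
  { apply Rmin_pos; [apply cond_pos| lra]. }
  exists (mkposreal _ Hpos). intros h Hh0 Hh. simpl in Hh.
  assert (Hh1 : Rabs h < d) by (eapply Rlt_le_trans; [exact Hh| apply Rmin_l]).
  assert (Hh2 : Rabs h < L - Rabs z) by (eapply Rlt_le_trans; [exact Hh| apply Rmin_r]).
  assert (Hzh : - L <= z + h <= L).
  { apply Rabs_lt_between in Hz. apply Rabs_lt_between in Hh2.
    destruct (Rle_dec 0 z); [rewrite Rabs_right in Hh2 by lra| rewrite Rabs_left in Hh2 by lra]; lra. }
  assert (B : ball 0 d h) by (change (Rabs (h - 0) < d); rewrite Rminus_0_r; exact Hh1).
  specialize (Hd h B (conj Hh0 Hzh)).
  change (Rabs ((F 0%nat (z + h) - F 0%nat z) / h - F 1%nat z) < eps) in Hd.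
  rewrite <- (H0 _ Hzh), <- (H0 _ Hzb). exact Hd.
Qed.

Lemma lip_from_deriv (f f' : R -> R) L M :
  (forall z, Rabs z < L -> derivable_pt_lim f z (f' z)) ->
  (forall z, Rabs z < L -> Rabs (f' z) <= M) ->
  forall z1 z2, Rabs z1 < L -> Rabs z2 < L -> Rabs (f z1 - f z2) <= M * Rabs (z1 - z2).
Proof.
  intros Hd HM.
  assert (K : forall a b, a < b -> Rabs a < L -> Rabs b < L -> Rabs (f b - f a) <= M * Rabs (b - a)).
  { intros a b Hab Ha Hb.
    apply Rabs_lt_between in Ha. apply Rabs_lt_between in Hb.
    destruct (MVT_cor2 f f' a b Hab) as [c [E Hc]].
    { intros c Hc. apply Hd. apply Rabs_lt_between. lra. }
    rewrite E, Rabs_mult. apply Rmult_le_compat_r; [apply Rabs_pos|].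
    apply HM. apply Rabs_lt_between. lra. }
  intros z1 z2 H1 H2. destruct (Rtotal_order z1 z2) as [Hl|[He|Hg]].
  - rewrite Rabs_minus_sym, (Rabs_minus_sym z1). now apply K.
  - subst. rewrite !Rminus_diag, Rabs_R0. lra.
  - now apply K.
Qed.

Definition Dm (L x t : R) : Prop := 0 <= t /\ Rabs x + t < L.

Lemma abs_sig sig u : Rabs sig = 1 -> Rabs (sig * u) = Rabs u.
Proof. intros H. rewrite Rabs_mult, H. ring. Qed.

Lemma geo L sig x t s : Rabs sig = 1 -> Dm L x t -> 0 <= s <= t -> Dm L (x + sig * (t - s)) s.
Proof.
  intros Hs [H1 H2] Hst. split; [lra|].
  pose proof (Rabs_triang x (sig * (t - s))). rewrite abs_sig in H by auto.
  rewrite (Rabs_right (t - s)) in H by lra. lra.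
Qed.

Lemma mono_char L c (NN : R -> R -> R) sig w s s' :
  Rabs sig = 1 -> 1 <= c ->
  (forall x t y t', Dm L x t -> Dm L y t' -> t <= t' -> Rabs (y - x) <= c * (t' - t) ->
     NN x t <= NN y t') ->
  s <= s' -> Dm L (w - sig * s) s -> Dm L (w - sig * s') s' ->
  NN (w - sig * s) s <= NN (w - sig * s') s'.
Proof.
  intros Hs Hc Hcone Hss D1 D2. apply Hcone; auto.
  replace (w - sig * s' - (w - sig * s)) with (sig * (s - s')) by ring.
  rewrite abs_sig, Rabs_left1 by (auto; lra). nra.
Qed.

Lemma int_char L c (NN : R -> R -> R) sig x t a b :
  Rabs sig = 1 -> 1 <= c ->
  (forall x t y t', Dm L x t -> Dm L y t' -> t <= t' -> Rabs (y - x) <= c * (t' - t) ->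
     NN x t <= NN y t') ->
  Dm L x t -> 0 <= a -> a <= b -> b <= t ->
  ex_RInt (fun s => NN (x + sig * (t - s)) s) a b.
Proof.
  intros Hs Hc Hcone HD Ha Hab Hbt. apply mono_ex_RInt; auto.
  intros u v Hu Huv Hv.
  replace (x + sig * (t - u)) with ((x + sig * t) - sig * u) by ring.
  replace (x + sig * (t - v)) with ((x + sig * t) - sig * v) by ring.
  apply mono_char with L c; auto.
  - replace ((x + sig * t) - sig * u) with (x + sig * (t - u)) by ring. apply geo; auto; lra.
  - replace ((x + sig * t) - sig * v) with (x + sig * (t - v)) by ring. apply geo; auto; lra.
Qed.

Lemma RInt_Chasles_R (f:R->R) a b c: ex_RInt f a b -> ex_RInt f b c -> RInt f a b + RInt f b c = RInt f a c.
Proof. intros H1 H2. exact (RInt_Chasles f a b c H1 H2). Qed.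

Lemma RInt_shift_R (f:R->R) d a b : ex_RInt f (a + d) (b + d) ->
  RInt (fun y => f (y + d)) a b = RInt f (a + d) (b + d).
Proof.
  intros H.
  assert (E := RInt_comp_lin f 1 d a b).
  rewrite !Rmult_1_l in E. rewrite <- E by exact H.
  apply RInt_ext. intros x _. rewrite Rmult_1_l. f_equal. ring.
Qed.

Lemma RInt_lb (h : R -> R) a b A : a <= b -> ex_RInt h a b ->
  (forall s, a < s < b -> A <= h s) -> A * (b - a) <= RInt h a b.
Proof.
  intros Hab Hex Hh.
  assert (E : RInt (fun _ => A) a b = A * (b - a)).
  { rewrite RInt_const. apply Rmult_comm. }
  rewrite <- E. apply RInt_le; auto. apply ex_RInt_const.
Qed.

Lemma RInt_ub (h : R -> R) a b C : a <= b -> ex_RInt h a b ->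
  (forall s, a < s < b -> h s <= C) -> RInt h a b <= C * (b - a).
Proof.
  intros Hab Hex Hh.
  assert (E : RInt (fun _ => C) a b = C * (b - a)).
  { rewrite RInt_const. apply Rmult_comm. }
  rewrite <- E. apply RInt_le; auto. apply ex_RInt_const.
Qed.

Lemma step_gen L c A M (F : R -> R) (NN : R -> R -> R) sig :
  Rabs sig = 1 -> 1 <= c -> 0 <= M -> (c + 1) * M <= A ->
  (forall z1 z2, Rabs z1 < L -> Rabs z2 < L -> Rabs (F z1 - F z2) <= M * Rabs (z1 - z2)) ->
  (forall z s, Dm L z s -> A <= NN z s) ->
  (forall x t y t', Dm L x t -> Dm L y t' -> t <= t' -> Rabs (y - x) <= c * (t' - t) ->
     NN x t <= NN y t') ->
  forall x t y t', Dm L x t -> Dm L y t' -> t <= t' -> Rabs (y - x) <= c * (t' - t) ->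
  F (x + sig * t) + RInt (fun s => NN (x + sig * (t - s)) s) 0 t <=
  F (y + sig * t') + RInt (fun s => NN (y + sig * (t' - s)) s) 0 t'.
Proof.
  intros Hs Hc HM HA HF Hlow Hcone x t y t' Dx Dy Htt Hxy.
  set (d := t' - t).
  set (H := fun s => NN (y + sig * (t' - s)) s).
  set (G0 := fun s => NN (x + sig * (t - s)) s).
  destruct Dx as [Dx1 Dx2]. destruct Dy as [Dy1 Dy2].
  assert (Dy : Dm L y t') by (split; assumption).
  assert (Dx : Dm L x t) by (split; assumption).
  assert (Ex1 : ex_RInt H 0 d) by (apply (int_char L c NN sig y t' 0 d Hs Hc Hcone Dy); unfold d; lra).
  assert (Ex2 : ex_RInt H d t') by (apply (int_char L c NN sig y t' d t' Hs Hc Hcone Dy); unfold d; lra).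
  assert (Ex3 : ex_RInt G0 0 t) by (apply (int_char L c NN sig x t 0 t Hs Hc Hcone Dx); lra).
  assert (Ch : RInt H 0 t' = RInt H 0 d + RInt H d t').
  { symmetry. exact (RInt_Chasles_R H 0 d t' Ex1 Ex2). }
  assert (Sh : RInt H d t' = RInt (fun r => H (r + d)) 0 t).
  { rewrite RInt_shift_R; replace (0 + d) with d by ring; replace (t + d) with t' by (unfold d; ring).
    - reflexivity.
    - exact Ex2. }
  assert (Lo1 : A * (d - 0) <= RInt H 0 d).
  { apply RInt_lb; [unfold d; lra| exact Ex1|]. intros s Hs0. apply Hlow.
    apply (geo L sig y t' s Hs Dy). unfold d in Hs0; lra. }
  assert (Ex4 : ex_RInt (fun r => H (r + d)) 0 t).
  { apply mono_ex_RInt; [lra|]. intros u v Hu Huv Hv. unfold H.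
    replace (y + sig * (t' - (u + d))) with ((y + sig * t') - sig * (u + d)) by ring.
    replace (y + sig * (t' - (v + d))) with ((y + sig * t') - sig * (v + d)) by ring.
    apply (mono_char L c NN sig); [exact Hs| exact Hc| exact Hcone| lra| |].
    - replace ((y + sig * t') - sig * (u + d)) with (y + sig * (t' - (u + d))) by ring.
      apply (geo L sig y t' (u + d) Hs Dy). unfold d; lra.
    - replace ((y + sig * t') - sig * (v + d)) with (y + sig * (t' - (v + d))) by ring.
      apply (geo L sig y t' (v + d) Hs Dy). unfold d; lra. }
  assert (Cmp : RInt G0 0 t <= RInt (fun r => H (r + d)) 0 t).
  { apply RInt_le; [lra| exact Ex3| exact Ex4|]. intros r Hr. unfold G0, H.
    replace (y + sig * (t' - (r + d))) with (y + sig * (t - r)) by (unfold d; ring).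
    apply Hcone.
    - apply (geo L sig x t r Hs Dx). lra.
    - split; [unfold d; lra|].
      pose proof (Rabs_triang y (sig * (t - r))). rewrite abs_sig in H0 by auto.
      rewrite (Rabs_right (t - r)) in H0 by lra. unfold d. lra.
    - unfold d; lra.
    - replace (y + sig * (t - r) - (x + sig * (t - r))) with (y - x) by ring. replace (r + d - r) with (t' - t) by (unfold d; ring). exact Hxy. }
  assert (Fb : F (x + sig * t) - M * ((c + 1) * d) <= F (y + sig * t')).
  { assert (Bx : Rabs (x + sig * t) < L).
    { pose proof (Rabs_triang x (sig * t)). rewrite abs_sig in H0 by auto.
      rewrite (Rabs_right t) in H0 by lra. lra. }
    assert (By : Rabs (y + sig * t') < L).
    { pose proof (Rabs_triang y (sig * t')). rewrite abs_sig in H0 by auto.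
      rewrite (Rabs_right t') in H0 by lra. lra. }
    pose proof (HF _ _ By Bx) as HH.
    assert (Rabs (y + sig * t' - (x + sig * t)) <= (c + 1) * d).
    { replace (y + sig * t' - (x + sig * t)) with ((y - x) + sig * d) by (unfold d; ring).
      pose proof (Rabs_triang (y - x) (sig * d)). rewrite abs_sig in H0 by auto.
      rewrite (Rabs_right d) in H0 by (unfold d; lra). fold d in Hxy. lra. }
    apply Rabs_le_between in HH.
    assert (M * Rabs (y + sig * t' - (x + sig * t)) <= M * ((c + 1) * d)) by (apply Rmult_le_compat_l; [exact HM| assumption]).
    lra. }
  fold H G0. rewrite Ch, Sh.
  assert (A * d >= M * ((c + 1) * d)).
  { assert (0 <= d) by (unfold d; lra).
    replace (M * ((c + 1) * d)) with (((c + 1) * M) * d) by ring.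
    apply Rle_ge, Rmult_le_compat_r; assumption. }
  replace (d - 0) with d in Lo1 by ring.
  lra.
Qed.

Lemma phi_n_S p mu g1 g2 f g n x t :
  phi_n p mu g1 g2 f g (S n) x t =
  f (x + t) + RInt (fun s => Nl p mu (phi_n p mu g1 g2 f g n (x + t - s) s +
                                      psi_n p mu g1 g2 f g n (x + t - s) s) s) 0 t.
Proof.
  unfold phi_n, psi_n. simpl. destruct (iterates p mu g1 g2 f g n). reflexivity.
Qed.

Lemma psi_n_S p mu g1 g2 f g n x t :
  psi_n p mu g1 g2 f g (S n) x t =
  g (x - t) + RInt (fun s => Nl p mu (phi_n p mu g1 g2 f g n (x - t + s) s +
                                      psi_n p mu g1 g2 f g n (x - t + s) s) s) 0 t.
Proof.
  unfold phi_n, psi_n. simpl. destruct (iterates p mu g1 g2 f g n). reflexivity.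
Qed.

Lemma phi_n_0 p mu g1 g2 f g x t : phi_n p mu g1 g2 f g 0 x t = g1.
Proof. reflexivity. Qed.
Lemma psi_n_0 p mu g1 g2 f g x t : psi_n p mu g1 g2 f g 0 x t = g2.
Proof. reflexivity. Qed.

Lemma sup_fin (u : nat -> R) a b : (forall n, a <= u n <= b) ->
  exists r, Sup_seq (fun n => Finite (u n)) = Finite r /\ a <= r <= b.
Proof.
  intros H.
  assert (L1 : Rbar_le a (Sup_seq (fun n => Finite (u n)))).
  { apply Sup_seq_minor_le with 0%nat. simpl. apply H. }
  assert (L2 : Rbar_le (Sup_seq (fun n => Finite (u n))) (Sup_seq (fun _ => Finite b))).
  { apply Sup_seq_le. intros n. simpl. apply H. }
  assert (E : Sup_seq (fun _ : nat => Finite b) = Finite b).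
  { apply is_sup_seq_unique. intros eps. split.
    - intros n. simpl. pose proof (cond_pos eps). lra.
    - exists 0%nat. simpl. pose proof (cond_pos eps). lra. }
  rewrite E in L2.
  destruct (Sup_seq (fun n => Finite (u n))) as [r| |]; simpl in L1, L2; try contradiction.
  exists r. split; [reflexivity| lra].
Qed.

Lemma Hk_of p mu gam : 1 < p -> 0 < mu ->
  Rmax 1 (Rpower (mu * p * Rpower 2 p) (1 / (p - 1))) < gam ->
  mu / 2 <= Rpower 2 (-p) * p * Rpower gam (p - 1).
Proof.
  intros Hp Hmu Hg.
  set (X := Rpower (mu * p * Rpower 2 p) (1 / (p - 1))).
  assert (HX : X < gam) by (eapply Rle_lt_trans; [apply Rmax_r| exact Hg]).
  assert (HX0 : 0 < X) by apply exp_pos.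
  assert (H2p : 0 < Rpower 2 p) by apply exp_pos.
  assert (Hb : 0 < mu * p * Rpower 2 p) by (apply Rmult_lt_0_compat; [nra|lra]).
  assert (E : Rpower X (p - 1) = mu * p * Rpower 2 p).
  { unfold X. rewrite Rpower_mult. replace (1 / (p - 1) * (p - 1)) with 1 by (field; lra).
    apply Rpower_1; lra. }
  assert (Le : Rpower X (p - 1) <= Rpower gam (p - 1)) by (apply Rle_Rpower_l; lra).
  assert (E2 : Rpower 2 (-p) * Rpower 2 p = 1).
  { rewrite <- Rpower_plus. replace (-p + p) with 0 by ring. apply Rpower_O. lra. }
  assert (Hm : 0 < Rpower 2 (-p)) by apply exp_pos.
  assert (Rpower 2 (-p) * p * (mu * p * Rpower 2 p) <= Rpower 2 (-p) * p * Rpower gam (p - 1)).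
  { apply Rmult_le_compat_l; [nra| lra]. }
  replace (Rpower 2 (-p) * p * (mu * p * Rpower 2 p)) with (p * p * mu * (Rpower 2 (-p) * Rpower 2 p)) in H by ring.
  rewrite E2 in H. assert (p * p * mu >= mu) by (assert (p * p >= 1) by nra; nra). lra.
Qed.
Theorem theorem3p3
  (p mu Rs Ts g1 g2 eps0 : R) (f g : R -> R)
  (Hp : 1 < p) (Hmu : 0 < mu) (Hpmu : p < 1 + 2 / mu)
  (HRs : 0 < Rs) (HTs : 0 < Ts)
  (Hg1 : 0 < g1) (Hg2 : 0 < g2)
  (Hgsum : Rmax 1 (Rpower (mu * p * Rpower 2 p) (1 / (p - 1))) < g1 + g2)
  (* (A1) *)
  (HA1 : T1_def p mu g1 g2 < Ts)
  (* (A2) *)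
  (HA2f : forall x, Rabs x < Rs + Ts -> g1 <= f x)
  (HA2g : forall x, Rabs x < Rs + Ts -> g2 <= g x)
  (* (A3) *)
  (HA3f : Ck_closed 4 (- (Rs + Ts)) (Rs + Ts) f)
  (HA3g : Ck_closed 4 (- (Rs + Ts)) (Rs + Ts) g)
  (* (A4) *)
  (Heps0 : 0 < eps0)
  (HA4 : exists M, is_lub (deriv_vals f g (Rs + Ts)) M /\
      Rpower 2 (- p) * Rpower (g1 + g2) p - mu / 2 * (g1 + g2) >= (2 + eps0) * M)
  (* (A5) *)
  (HA5 : exists eps1, eps1 <> -1 /\
      Rpower 2 (- p) * (2 * p - 1) * (1 + eps1 / (2 * (1 + eps1))) * (1 - 1 / (2 * p))
        - Rpower 2 (- p + 1) * p - mu > 0 /\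
      exists M, is_lub (deriv_vals f g (Rs + Ts)) M /\
      Rpower 2 (- p) * Rpower (g1 + g2) p - mu / 2 * (g1 + g2) >= (2 + eps1) * M) :
  forall x y, Rabs x < Rs -> Rabs y < Rs ->
    Rbar_le
      (Rbar_abs (Rbar_minus (blowup_time p mu g1 g2 f g Ts x)
                            (blowup_time p mu g1 g2 f g Ts y)))
      (Finite (1 / (1 + eps0) * Rabs (x - y))).
Proof.
  intros x0 y0 Hx0 Hy0.
  destruct HA4 as [M [HMlub HAM]].
  clear HA5 HA1.
  pose proof (Hk_of p mu (g1 + g2) Hp Hmu Hgsum) as Hk.
  set (L := Rs + Ts) in *.
  set (gam := g1 + g2) in *.
  set (A := Rpower 2 (- p) * Rpower gam p - mu / 2 * gam) in *.
  set (c := 1 + eps0).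
  assert (Hgam : 0 < gam) by (unfold gam; lra).
  assert (HMub : forall z, Rabs z < L -> Rabs (Derive f z) + Rabs (Derive g z) <= M).
  { intros z Hz. apply (proj1 HMlub). exists z. split; auto. }
  assert (HM0 : 0 <= M).
  { assert (HL0 : Rabs 0 < L) by (rewrite Rabs_R0; unfold L; lra).
    pose proof (HMub 0 HL0). pose proof (Rabs_pos (Derive f 0)). pose proof (Rabs_pos (Derive g 0)). lra. }
  destruct (ck_deriv 4 L f ltac:(lia) HA3f) as [f' Hf'].
  destruct (ck_deriv 4 L g ltac:(lia) HA3g) as [g' Hg'].
  assert (HFlip : forall z1 z2, Rabs z1 < L -> Rabs z2 < L -> Rabs (f z1 - f z2) <= M * Rabs (z1 - z2)).
  { apply lip_from_deriv with f'; auto. intros z Hz.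
    replace (f' z) with (Derive f z).
    - pose proof (HMub z Hz). pose proof (Rabs_pos (Derive g z)). lra.
    - apply is_derive_unique. apply is_derive_Reals. auto. }
  assert (HGlip : forall z1 z2, Rabs z1 < L -> Rabs z2 < L -> Rabs (g z1 - g z2) <= M * Rabs (z1 - z2)).
  { apply lip_from_deriv with g'; auto. intros z Hz.
    replace (g' z) with (Derive g z).
    - pose proof (HMub z Hz). pose proof (Rabs_pos (Derive f z)). lra.
    - apply is_derive_unique. apply is_derive_Reals. auto. }
  set (P := phi_n p mu g1 g2 f g).
  set (Q := psi_n p mu g1 g2 f g).
  set (NN := fun n z s => Nl p mu (P n z s + Q n z s) s).
  assert (Pe : forall n x t, P (S n) x t = f (x + 1 * t) + RInt (fun s => NN n (x + 1 * (t - s)) s) 0 t).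
  { intros n x t. unfold P. rewrite phi_n_S. rewrite Rmult_1_l. f_equal. apply RInt_ext. intros s _.
    unfold NN, P, Q. replace (x + 1 * (t - s)) with (x + t - s) by ring. reflexivity. }
  assert (Qe : forall n x t, Q (S n) x t = g (x + -1 * t) + RInt (fun s => NN n (x + -1 * (t - s)) s) 0 t).
  { intros n x t. unfold Q. rewrite psi_n_S. replace (x + -1 * t) with (x - t) by ring. f_equal. apply RInt_ext. intros s _.
    unfold NN, P, Q. replace (x + -1 * (t - s)) with (x - t + s) by ring. reflexivity. }
  assert (Hc1 : 1 <= c) by (unfold c; lra).
  assert (HA' : (c + 1) * M <= A) by (unfold c; lra).
  assert (HA0 : 0 <= A) by nra.
  assert (S1 : Rabs 1 = 1) by apply Rabs_R1.
  assert (S2 : Rabs (-1) = 1) by (unfold Rabs; destruct Rcase_abs; lra).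
  assert (Inv : forall n, (forall x t, Dm L x t -> g1 <= P n x t /\ g2 <= Q n x t) /\
     (forall x t y t', Dm L x t -> Dm L y t' -> t <= t' -> Rabs (y - x) <= c * (t' - t) ->
        P n x t <= P n y t' /\ Q n x t <= Q n y t')).
  { induction n.
    - split; intros; unfold P, Q; rewrite !phi_n_0, !psi_n_0; lra.
    - destruct IHn as [IL IC].
      assert (Hlow : forall z s, Dm L z s -> A <= NN n z s).
      { intros z s Hz. destruct (IL z s Hz). unfold NN, A. apply Nl_lower; auto; [unfold gam; lra| destruct Hz; lra]. }
      assert (Hcone : forall x t y t', Dm L x t -> Dm L y t' -> t <= t' -> Rabs (y - x) <= c * (t' - t) ->
                NN n x t <= NN n y t').
      { intros x t y t' Dx Dy Htt Hxy. destruct (IC x t y t' Dx Dy Htt Hxy). destruct (IL x t Dx).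
        unfold NN. apply Nl_mono with gam; auto; [unfold gam; lra| lra| destruct Dx; lra]. }
      assert (RIlow : forall sig, Rabs sig = 1 -> forall x t, Dm L x t ->
                0 <= RInt (fun s => NN n (x + sig * (t - s)) s) 0 t).
      { intros sig Hs x t Dx.
        assert (Ex : ex_RInt (fun s => NN n (x + sig * (t - s)) s) 0 t).
        { apply (int_char L c (NN n) sig x t 0 t Hs Hc1 Hcone Dx); destruct Dx; lra. }
        assert (A * (t - 0) <= RInt (fun s => NN n (x + sig * (t - s)) s) 0 t).
        { apply RInt_lb; [destruct Dx; lra| exact Ex|]. intros s Hs0. apply Hlow.
          apply (geo L sig x t s Hs Dx). lra. }
        destruct Dx. nra. }
      split.
      + intros x t Dx. rewrite Pe, Qe. pose proof (RIlow 1 S1 x t Dx). pose proof (RIlow (-1) S2 x t Dx).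
        destruct Dx as [Dx1 Dx2].
        assert (Rabs (x + 1 * t) < L).
        { pose proof (Rabs_triang x (1 * t)). rewrite abs_sig in H1 by auto. rewrite (Rabs_right t) in H1 by lra. lra. }
        assert (Rabs (x + -1 * t) < L).
        { pose proof (Rabs_triang x (-1 * t)). rewrite abs_sig in H2 by auto. rewrite (Rabs_right t) in H2 by lra. lra. }
        pose proof (HA2f _ H1). pose proof (HA2g _ H2). lra.
      + intros x t y t' Dx Dy Htt Hxy. rewrite !Pe, !Qe. split.
        * apply (step_gen L c A M f (NN n) 1 S1 Hc1 HM0 HA' HFlip Hlow Hcone); auto.
        * apply (step_gen L c A M g (NN n) (-1) S2 Hc1 HM0 HA' HGlip Hlow Hcone); auto. }
  set (Bf := Rabs (f 0) + M * L).
  set (Bg := Rabs (g 0) + M * L).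
  assert (HL0 : Rabs 0 < L) by (rewrite Rabs_R0; unfold L; lra).
  assert (HBf : forall z, Rabs z < L -> f z <= Bf).
  { intros z Hz. pose proof (HFlip z 0 Hz HL0). rewrite Rminus_0_r in H.
    apply Rabs_le_between in H. pose proof (Rle_abs (f 0)).
    assert (M * Rabs z <= M * L) by (apply Rmult_le_compat_l; lra). unfold Bf. lra. }
  assert (HBg : forall z, Rabs z < L -> g z <= Bg).
  { intros z Hz. pose proof (HGlip z 0 Hz HL0). rewrite Rminus_0_r in H.
    apply Rabs_le_between in H. pose proof (Rle_abs (g 0)).
    assert (M * Rabs z <= M * L) by (apply Rmult_le_compat_l; lra). unfold Bg. lra. }
  assert (HBg0 : 0 <= Bg) by (unfold Bg; pose proof (Rabs_pos (g 0)); assert (0 <= M * L) by (apply Rmult_le_pos; unfold L; lra); lra).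
  set (K := Bf + Bg + 2).
  set (C := Rpower 2 (- p) * Rpower K p).
  assert (HC : 0 < C) by (apply Rmult_lt_0_compat; apply exp_pos).
  set (tau := Rmin (Ts / 2) (1 / C)).
  assert (Htau0 : 0 < tau) by (apply Rmin_pos; [lra| apply Rdiv_lt_0_compat; lra]).
  assert (HtauT : tau < Ts) by (unfold tau; eapply Rle_lt_trans; [apply Rmin_l| lra]).
  assert (HtauC : C * tau <= 1).
  { unfold tau. assert (Rmin (Ts / 2) (1 / C) <= 1 / C) by apply Rmin_r.
    apply Rmult_le_compat_l with (r := C) in H; [|lra].
    replace (C * (1 / C)) with 1 in H by (field; lra). exact H. }
  assert (HgK : gam <= K).
  { pose proof (HA2f 0 HL0). pose proof (HA2g 0 HL0). pose proof (HBf 0 HL0). pose proof (HBg 0 HL0).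
    unfold K, gam. lra. }
  assert (UB : forall n x t, Dm L x t -> t <= tau -> P n x t + Q n x t <= K).
  { induction n; intros x t Dx Ht.
    - unfold P, Q. rewrite phi_n_0, psi_n_0. fold gam. lra.
    - destruct (Inv n) as [IL IC].
      assert (Hcone : forall x t y t', Dm L x t -> Dm L y t' -> t <= t' -> Rabs (y - x) <= c * (t' - t) ->
                NN n x t <= NN n y t').
      { intros x1 t1 y1 t1' Dx1 Dy1 Htt Hxy. destruct (IC x1 t1 y1 t1' Dx1 Dy1 Htt Hxy). destruct (IL x1 t1 Dx1).
        unfold NN. apply Nl_mono with gam; auto; [unfold gam; lra| lra| destruct Dx1; lra]. }
      assert (RIup : forall sig, Rabs sig = 1 ->
                RInt (fun s => NN n (x + sig * (t - s)) s) 0 t <= C * t).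
      { intros sig Hs.
        assert (Ex : ex_RInt (fun s => NN n (x + sig * (t - s)) s) 0 t).
        { apply (int_char L c (NN n) sig x t 0 t Hs Hc1 Hcone Dx); destruct Dx; lra. }
        replace (C * t) with (C * (t - 0)) by ring.
        apply RInt_ub; [destruct Dx; lra| exact Ex|]. intros s Hs0.
        assert (Dz : Dm L (x + sig * (t - s)) s) by (apply (geo L sig x t s Hs Dx); lra).
        destruct (IL _ _ Dz). pose proof (IHn _ _ Dz ltac:(lra)).
        unfold NN, C. apply Nl_upper; lra. }
      rewrite Pe, Qe. pose proof (RIup 1 S1). pose proof (RIup (-1) S2).
      destruct Dx as [Dx1 Dx2].
      assert (Rabs (x + 1 * t) < L).
      { pose proof (Rabs_triang x (1 * t)). rewrite abs_sig in H1 by auto. rewrite (Rabs_right t) in H1 by lra. lra. }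
      assert (Rabs (x + -1 * t) < L).
      { pose proof (Rabs_triang x (-1 * t)). rewrite abs_sig in H2 by auto. rewrite (Rabs_right t) in H2 by lra. lra. }
      pose proof (HBf _ H1). pose proof (HBg _ H2).
      assert (C * t <= C * tau) by (apply Rmult_le_compat_l; lra).
      unfold K. lra. }
  set (usup := fun z t => Rbar_plus (phi_sup p mu g1 g2 f g z t) (psi_sup p mu g1 g2 f g z t)).
  assert (Ucone : forall x t y t', Dm L x t -> Dm L y t' -> t <= t' -> Rabs (y - x) <= c * (t' - t) ->
            Rbar_le (usup x t) (usup y t')).
  { intros x t y t' Dx Dy Htt Hxy. unfold usup, phi_sup, psi_sup.
    apply Rbar_plus_le_compat; apply Sup_seq_le; intros n; simpl;
      destruct (Inv n) as [_ IC]; destruct (IC x t y t' Dx Dy Htt Hxy); auto. }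
  assert (Ufin : forall z, Rabs z < Rs -> Rbar_lt (usup z tau) p_infty).
  { intros z Hz. assert (Dz : Dm L z tau) by (split; unfold L; lra).
    destruct (sup_fin (fun n => P n z tau) g1 (K - g2)) as [r1 [E1 _]].
    { intros n. destruct (Inv n) as [IL _]. destruct (IL z tau Dz). pose proof (UB n z tau Dz ltac:(lra)). lra. }
    destruct (sup_fin (fun n => Q n z tau) g2 (K - g1)) as [r2 [E2 _]].
    { intros n. destruct (Inv n) as [IL _]. destruct (IL z tau Dz). pose proof (UB n z tau Dz ltac:(lra)). lra. }
    unfold usup, phi_sup, psi_sup. fold P Q. rewrite E1, E2. simpl. exact I. }
  assert (Tfin : forall z, Rabs z < Rs -> exists a, blowup_time p mu g1 g2 f g Ts z = Finite a /\ tau <= a <= Ts).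
  { intros z Hz. unfold blowup_time.
    destruct (Lub_Rbar_correct (fun t => 0 < t < Ts /\
      Rbar_lt (Rbar_plus (phi_sup p mu g1 g2 f g z t) (psi_sup p mu g1 g2 f g z t)) p_infty)) as [Hub Hle].
    assert (L1 := Hub tau (conj (conj Htau0 HtauT) (Ufin z Hz))).
    assert (L2 : Rbar_le (Lub_Rbar (fun t => 0 < t < Ts /\
      Rbar_lt (Rbar_plus (phi_sup p mu g1 g2 f g z t) (psi_sup p mu g1 g2 f g z t)) p_infty)) (Finite Ts)).
    { apply Hle. intros t [[H1 H2] _]. simpl. lra. }
    destruct (Lub_Rbar _) as [a| |]; simpl in L1, L2; try contradiction.
    exists a. split; [reflexivity| lra]. }
  assert (Hc0 : 0 < c) by lra.
  assert (Lip1 : forall x y a b, Rabs x < Rs -> Rabs y < Rs ->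
            blowup_time p mu g1 g2 f g Ts x = Finite a ->
            blowup_time p mu g1 g2 f g Ts y = Finite b -> tau <= b ->
            a <= b + Rabs (x - y) / c).
  { intros x y a b Hx Hy Ea Eb Hb.
    unfold blowup_time in Ea, Eb.
    destruct (Lub_Rbar_correct (fun t => 0 < t < Ts /\
      Rbar_lt (Rbar_plus (phi_sup p mu g1 g2 f g x t) (psi_sup p mu g1 g2 f g x t)) p_infty)) as [_ Hlex].
    destruct (Lub_Rbar_correct (fun t => 0 < t < Ts /\
      Rbar_lt (Rbar_plus (phi_sup p mu g1 g2 f g y t) (psi_sup p mu g1 g2 f g y t)) p_infty)) as [Huby _].
    rewrite Eb in Huby.
    assert (Hh : Rbar_le (Lub_Rbar (fun t => 0 < t < Ts /\
      Rbar_lt (Rbar_plus (phi_sup p mu g1 g2 f g x t) (psi_sup p mu g1 g2 f g x t)) p_infty)) (Finite (b + Rabs (x - y) / c))).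
    { apply Hlex. intros t [[H1 H2] Hfin]. simpl.
      assert (Hnn : 0 <= Rabs (x - y) / c) by (apply Rdiv_le_0_compat; [apply Rabs_pos| lra]).
      destruct (Rle_dec t (Rabs (x - y) / c)) as [Hl|Hl]; [lra|]. apply Rnot_le_lt in Hl.
      assert (Hin := Huby (t - Rabs (x - y) / c)). simpl in Hin.
      cut (t - Rabs (x - y) / c <= b); [lra|]. apply Hin. split; [lra|].
      eapply Rbar_le_lt_trans; [| exact Hfin].
      change (Rbar_le (usup y (t - Rabs (x - y) / c)) (usup x t)).
      apply Ucone.
      - split; [lra| unfold L; lra].
      - split; [lra| unfold L; lra].
      - assert (0 <= Rabs (x - y) / c) by (apply Rdiv_le_0_compat; [apply Rabs_pos| lra]). lra.
      - replace (c * (t - (t - Rabs (x - y) / c))) with (Rabs (x - y)) by (field; lra).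
        rewrite Rabs_minus_sym. lra. }
    rewrite Ea in Hh. simpl in Hh. exact Hh. }
  destruct (Tfin x0 Hx0) as [a [Ea Ha]]. destruct (Tfin y0 Hy0) as [b [Eb Hb]].
  rewrite Ea, Eb. simpl.
  pose proof (Lip1 x0 y0 a b Hx0 Hy0 Ea Eb (proj1 Hb)).
  pose proof (Lip1 y0 x0 b a Hy0 Hx0 Eb Ea (proj1 Ha)).
  rewrite Rabs_minus_sym in H0.
  replace (1 / (1 + eps0) * Rabs (x0 - y0)) with (Rabs (x0 - y0) / c) by (unfold c; field; lra).
  apply Rabs_le. lra.
Qed.
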